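(* Let $\theta,\alpha\in(0,\pi/2)$ with $\theta\ne\pi/4$. For $b\in\mathrm{Im}\,\mathbb{H}$ and $c\in\mathbb{H}$ set $$V=\begin{bmatrix}-b\cos^2\alpha\cos\theta\sin\theta\\ b\cos\alpha\sin\alpha\cos\theta\end{bmatrix},\qquad W=\begin{bmatrix}\bar c\sin\alpha\sin^2\theta+c\sin\alpha\cos^2\theta\\ \bar c\cos\alpha\sin\theta\end{bmatrix}.$$ If there exist non-zero $b\in\mathrm{Im}\,\mathbb{H}$ and $c\in\mathbb{H}$ with $V=W$, then $\tan^2\alpha=\dfrac{\sin^2\theta}{\cos^2\theta-\sin^2\theta}$.
   Context: $\mathbb{H}$ denotes the quaternions and $\mathrm{Im}\,\mathbb{H}$ the purely imaginary quaternions; $\bar c$ is quaternionic conjugation. *)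

(* Defs.v *)
From Stdlib Require Import Reals.
Open Scope R_scope.

Record quat : Type := mkQ { qre : R; qi : R; qj : R; qk : R }.

Definition q0 : quat := mkQ 0 0 0 0.
Definition qadd (p q : quat) : quat :=
  mkQ (qre p + qre q) (qi p + qi q) (qj p + qj q) (qk p + qk q).
Definition qopp (p : quat) : quat := mkQ (- qre p) (- qi p) (- qj p) (- qk p).
Definition qscale (r : R) (p : quat) : quat :=
  mkQ (r * qre p) (r * qi p) (r * qj p) (r * qk p).
Definition qconj (p : quat) : quat := mkQ (qre p) (- qi p) (- qj p) (- qk p).
Definition is_imH (p : quat) : Prop := qre p = 0.

Definition Vvec (theta alpha : R) (b : quat) : quat * quat :=
  ( qopp (qscale (cos alpha ^ 2 * cos theta * sin theta) b),
    qscale (cos alpha * sin alpha * cos theta) b ).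

Definition Wvec (theta alpha : R) (c : quat) : quat * quat :=
  ( qadd (qscale (sin alpha * sin theta ^ 2) (qconj c))
         (qscale (sin alpha * cos theta ^ 2) c),
    qscale (cos alpha * sin theta) (qconj c) ).

(* Main.v *)
Require Import Defs.
From Stdlib Require Import Reals Lra.
Open Scope R_scope.

Lemma key (ca sa ct st b c : R) : ca <> 0 ->
  -(ca^2*ct*st*b) = sa*st^2*(-c)+sa*ct^2*c ->
  ca*sa*ct*b = ca*st*(-c) ->
  ct*(ca^2*st^2 - sa^2*(ct^2-st^2))*b = 0.
Proof.
  intros Hca E1 E2.
  assert (H2 : sa*ct*b + st*c = 0).
  { assert (ca*(sa*ct*b + st*c) = 0) by (rewrite Rmult_plus_distr_l; lra).
    destruct (Rmult_integral _ _ H); [contradiction|assumption]. }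
  assert (H1 : ca^2*ct*st*b + sa*(ct^2-st^2)*c = 0).
  { replace (ca^2*ct*st*b + sa*(ct^2-st^2)*c) with
      (-(-(ca^2*ct*st*b) - (sa*st^2*(-c)+sa*ct^2*c))) by ring.
    rewrite E1; ring. }
  replace (ct*(ca^2*st^2 - sa^2*(ct^2-st^2))*b) with
    (st*(ca^2*ct*st*b + sa*(ct^2-st^2)*c) - sa*(ct^2-st^2)*(sa*ct*b + st*c)) by ring.
  rewrite H1, H2; ring.
Qed.

Theorem proposition3p2 (theta alpha : R) :
  0 < theta < PI / 2 -> 0 < alpha < PI / 2 -> theta <> PI / 4 ->
  (exists b c : quat, is_imH b /\ b <> q0 /\ c <> q0 /\
     Vvec theta alpha b = Wvec theta alpha c) ->
  tan alpha ^ 2 = sin theta ^ 2 / (cos theta ^ 2 - sin theta ^ 2).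
Proof.
  intros Ht Ha _ [b [c [Hb [Hb0 [_ E]]]]].
  assert (st : 0 < sin theta) by (apply sin_gt_0; lra).
  assert (ct : 0 < cos theta) by (apply cos_gt_0; lra).
  assert (sa : 0 < sin alpha) by (apply sin_gt_0; lra).
  assert (ca : 0 < cos alpha) by (apply cos_gt_0; lra).
  destruct b as [b0 b1 b2 b3], c as [c0 c1 c2 c3].
  unfold is_imH in Hb; simpl in Hb; subst b0.
  unfold Vvec, Wvec, qopp, qscale, qadd, qconj in E; simpl in E.
  injection E; intros F3 F2 F1 F0 G3 G2 G1 G0.
  set (D := cos alpha ^ 2 * sin theta ^ 2 - sin alpha ^ 2 * (cos theta ^ 2 - sin theta ^ 2)).
  assert (HD : D = 0).
  { assert (K1 := key _ _ _ _ _ _ (Rgt_not_eq _ _ ca) G1 F1).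
    assert (K2 := key _ _ _ _ _ _ (Rgt_not_eq _ _ ca) G2 F2).
    assert (K3 := key _ _ _ _ _ _ (Rgt_not_eq _ _ ca) G3 F3).
    fold D in K1, K2, K3.
    destruct (Req_dec D 0) as [|HD]; [assumption|exfalso].
    apply Hb0. unfold q0.
    assert (forall x, cos theta * D * x = 0 -> x = 0).
    { intros x Hx. destruct (Rmult_integral _ _ Hx) as [Hy|]; [|assumption].
      destruct (Rmult_integral _ _ Hy); [lra|contradiction]. }
    rewrite (H _ K1), (H _ K2), (H _ K3). reflexivity. }
  unfold D in HD.
  assert (Hd : cos theta ^ 2 - sin theta ^ 2 <> 0).
  { intro Z. rewrite Z in HD. assert (0 < cos alpha ^ 2 * sin theta ^ 2).
    { apply Rmult_lt_0_compat; apply pow_lt; lra. } lra. }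
  unfold tan. field_simplify_eq; [|split; [exact Hd| lra]].
  lra.
Qed.
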